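(* On the interval $[0,1]$: (i) the function $\dfrac{\cos(\frac12\pi x)}{1-x^2}$ attains its global maximum at $x=0$; (ii) the function $\dfrac{(x^2+1)\cos^2(\frac12\pi x)}{(1-x^2)^2}$ attains its global minimum at $x=0$.
   Context: At $x=1$ both functions have removable singularities and are understood as their continuous extensions. *)

(* Defs.v *)
From Stdlib Require Import Reals.
Open Scope R_scope.

(* f(x) = cos(pi x / 2) / (1 - x^2), extended continuously at x = 1
   (limit value pi/4). *)
Definition f6 (x : R) : R :=
  if Req_EM_T x 1 then PI / 4 else cos (PI * x / 2) / (1 - x ^ 2).

(* g(x) = (x^2 + 1) cos^2(pi x / 2) / (1 - x^2)^2, extended continuously at
   x = 1 (limit value 2 (pi/4)^2 = pi^2/8). *)
Definition g6 (x : R) : R :=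
  if Req_EM_T x 1 then PI ^ 2 / 8
  else (x ^ 2 + 1) * (cos (PI * x / 2)) ^ 2 / (1 - x ^ 2) ^ 2.

(* Main.v *)
Require Import Defs.
From Stdlib Require Import Reals.
From Stdlib Require Import Lra Psatz.
Open Scope R_scope.

Lemma ca2 a : cos_approx a 2 = 1 - a^2/2 + a^4/24.
Proof. unfold cos_approx, cos_term; simpl; field. Qed.
Lemma ca1 a : cos_approx a 1 = 1 - a^2/2.
Proof. unfold cos_approx, cos_term; simpl; field. Qed.
Lemma ca3 a : cos_approx a 3 = 1 - a^2/2 + a^4/24 - a^6/720.
Proof. unfold cos_approx, cos_term; simpl; field. Qed.
Lemma sa1 a : sin_approx a 1 = a - a^3/6.
Proof. unfold sin_approx, sin_term; simpl; field. Qed.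
Lemma sa2 a : sin_approx a 2 = a - a^3/6 + a^5/120.
Proof. unfold sin_approx, sin_term; simpl; field. Qed.

Lemma cos_up t : 0 <= t <= PI/2 -> cos t <= 1 - t^2/2 + t^4/24.
Proof. intros [h1 h2]. pose proof PI_RGT_0 as HP0. destruct (cos_bound t 0) as [_ H]; try lra. rewrite <- ca2; exact H. Qed.
Lemma cos_lo t : 0 <= t <= PI/2 -> 1 - t^2/2 <= cos t.
Proof. intros [h1 h2]. pose proof PI_RGT_0 as HP0. destruct (cos_bound t 0) as [H _]; try lra. rewrite <- ca1; exact H. Qed.
Lemma sin_up u : 0 <= u <= PI -> sin u <= u - u^3/6 + u^5/120.
Proof. intros [h1 h2]. destruct (sin_bound u 0) as [_ H]; try lra.
  rewrite <- sa2; exact H. Qed.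
Lemma sin_lo u : 0 <= u <= PI -> u - u^3/6 <= sin u.
Proof. intros [h1 h2]. destruct (sin_bound u 0) as [H _]; try lra.
  rewrite <- sa1; exact H. Qed.

Lemma pi_lo : 3 <= PI.
Proof.
  destruct (Rle_or_lt 3 PI) as [h|h]; [exact h|exfalso].
  pose proof PI_RGT_0 as HP0.
  assert (H := cos_bound (PI/2) 1). rewrite cos_PI2 in H.
  destruct H as [H _]; try lra. replace (2*1+1)%nat with 3%nat in H by reflexivity.
  rewrite ca3 in H. set (y := PI/2) in *.
  assert (0 < y <= 3/2) by (unfold y; lra).
  set (z := y^2). assert (0 < z <= 9/4) by (unfold z; nra).
  replace (y^4) with (z^2) in H by (unfold z; ring).
  replace (y^6) with (z^3) in H by (unfold z; ring).
  assert (z^3 <= z^2 * (9/4)) by (replace (z^3) with (z^2*z) by ring; apply Rmult_le_compat_l; nra).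
  assert (0 <= (9/4 - z) * (1/2 - 37/960*(z+9/4))) by (apply Rmult_le_pos; lra).
  fold z in H. nra.
Qed.

Lemma pi_hi : PI <= 16/5.
Proof.
  destruct (Rle_or_lt PI (16/5)) as [h|h]; [exact h|exfalso].
  pose proof PI_4 as HP4.
  assert (H := cos_up (PI/2)). rewrite cos_PI2 in H.
  assert (H' : 0 <= 1 - (PI/2)^2/2 + (PI/2)^4/24) by (apply H; pose proof PI_RGT_0; lra).
  set (y := PI/2) in *. assert (8/5 < y <= 2) by (unfold y; lra).
  set (z := y^2) in *. assert (64/25 < z <= 4) by (unfold z; nra).
  replace (y^4) with (z^2) in H' by (unfold z; ring). nra.
Qed.

Lemma part1 x : 0 <= x < 1 -> cos (PI * x / 2) <= 1 - x^2.
Proof.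
  intros [h1 h2]. pose proof pi_lo as Hlo; pose proof pi_hi as Hhi.
  destruct (Rle_or_lt x (3/5)) as [hx|hx].
  - assert (H := cos_up (PI*x/2)).
    assert (Hb : cos (PI * x / 2) <= 1 - (PI*x/2)^2/2 + (PI*x/2)^4/24) by (apply H; split; nra).
    eapply Rle_trans; [exact Hb|].
    set (p := PI) in *.
    assert (HP : p^2/8 - p^4 * x^2/384 >= 1).
    { assert (p^2 >= 9) by nra. assert (p^2 <= 256/25) by nra.
      assert (p^4 <= (256/25)^2) by nra. assert (x^2 <= 9/25) by nra.
      assert (p^4 * x^2 <= (256/25)^2 * (9/25)) by (apply Rmult_le_compat; nra).
      nra. }
    replace (1 - (p * x / 2) ^ 2 / 2 + (p * x / 2) ^ 4 / 24)
      with (1 - x^2 * (p^2/8 - p^4*x^2/384)) by field.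
    assert (0 <= x^2) by nra. nra.
  - set (s := 1 - x).
    replace (PI * x / 2) with (PI/2 - PI*s/2) by (unfold s; field).
    rewrite cos_shift.
    assert (Hb : sin (PI*s/2) <= (PI*s/2) - (PI*s/2)^3/6 + (PI*s/2)^5/120)
      by (apply sin_up; unfold s; split; nra).
    eapply Rle_trans; [exact Hb|].
    set (u := PI*s/2) in *.
    assert (0 <= u <= 16/25) by (unfold u, s; split; nra).
    assert (0 <= u^3) by (apply pow_le; lra).
    assert (u^5 <= u^3) by (replace (u^5) with (u^3*u^2) by ring;
      rewrite <- (Rmult_1_r (u^3)) at 2; apply Rmult_le_compat_l; nra).
    assert (u - u^3/6 + u^5/120 <= u) by lra.
    replace (1 - x^2) with (s * (2 - s)) by (unfold s; ring).
    unfold u in *. assert (0 < s <= 2/5) by (unfold s; lra). nra.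
Qed.

Lemma polyB (s : R) : 0 < s <= 1/2 -> (2-s)^2 <= (2-2*s+s^2)*(3/2-9*s^2/16)^2.
Proof.
intros Hs.
assert (h3: 0 <= s^3) by (apply pow_le; lra).
assert (h4: s^4 <= s^3/2) by (replace (s^4) with (s^3*s) by ring; nra).
assert (h5: s^5 <= s^3/4) by (replace (s^5) with (s^3*s^2) by ring; nra).
assert (h6: 0 <= s^6) by (apply pow_le; lra).
assert (C: 0 <= 1/2 - s/2 - 17/8*s^2 + 1377/512*s^3).
{ assert (0 <= (1/2 - s) * (1/2 + 17/8*s - 1377/512*s^2 + 17/8*(1/2) - 1377/512*(1/2)*s - 1377/512/4)) by (apply Rmult_le_pos; nra).
  nra. }
nra. Qed.

Lemma part2 x : 0 <= x < 1 -> (1 - x^2)^2 <= (x^2+1) * cos (PI * x / 2) ^ 2.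
Proof.
  intros [h1 h2]. pose proof pi_lo as Hlo; pose proof pi_hi as Hhi.
  destruct (Rle_or_lt x (1/2)) as [hx|hx].
  - assert (Hb : 1 - (PI*x/2)^2/2 <= cos (PI * x / 2)) by (apply cos_lo; split; nra).
    set (c := cos (PI*x/2)) in *. set (p := PI) in *.
    set (L := 1 - (p*x/2)^2/2) in *.
    assert (Hpx : 0 <= p*x <= 8/5) by (split; nra).
    assert (HL : 0 <= L) by (unfold L; replace ((p*x/2)^2) with ((p*x)^2/4) by field; nra).
    assert (L^2 <= c^2) by nra.
    assert ((1 - x^2)^2 <= (x^2+1) * L^2).
    { unfold L. set (a := p^2/8). assert (9/8 <= a <= 32/25) by (unfold a; nra).
      replace ((1 - (p * x / 2) ^ 2 / 2)) with (1 - a * x^2) by (unfold a; field).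
      set (z := x^2). assert (0 <= z <= 1/4) by (unfold z; nra).
      replace (x^2) with z by reflexivity.
      assert (0 <= z * (3 - 2*a + z*(a^2 - 2*a - 1) + a^2 * z^2)).
      { apply Rmult_le_pos; [lra|].
        assert (0 <= (1/4 - z) * (2 - 81/64*(z+1/4))) by (apply Rmult_le_pos; lra).
        assert (81/64 * z^2 <= a^2 * z^2) by (apply Rmult_le_compat_r; nra).
        assert (0 <= z * (a-1)^2) by (apply Rmult_le_pos; nra).
        nra. }
      nra. }
    assert (0 <= x^2+1) by nra. nra.
  - set (s := 1 - x).
    replace (PI * x / 2) with (PI/2 - PI*s/2) by (unfold s; field).
    rewrite cos_shift.
    assert (Hb : (PI*s/2) - (PI*s/2)^3/6 <= sin (PI*s/2))
      by (apply sin_lo; unfold s; split; nra).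
    set (c := sin (PI*s/2)) in *.
    assert (0 < s <= 1/2) by (unfold s; lra).
    set (p := PI) in *.
    replace (1 - x^2) with (s * (2 - s)) by (unfold s; ring).
    replace (x^2 + 1) with (2 - 2*s + s^2) by (unfold s; ring).
    set (S := p*s/2 - (p*s/2)^3/6) in *.
    replace S with (s * (p/2 - p^3*s^2/48)) in Hb by (unfold S; field).
    set (q := p/2 - p^3*s^2/48) in *.
    assert (Hs2 : 0 <= s^2 <= 1/4) by nra.
    assert (Hq : 3/2 - 9*s^2/16 <= q).
    { unfold q.
      assert (E : p/2 - p^3*s^2/48 - (3/2 - 9*s^2/16) = (p-3)*(1/2 - s^2*(p^2+3*p+9)/48)) by field.
      assert (p^2+3*p+9 <= 29) by nra.
      assert (s^2*(p^2+3*p+9) <= 1/4*29) by (apply Rmult_le_compat; nra).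
      assert (0 <= (p-3)*(1/2 - s^2*(p^2+3*p+9)/48)) by (apply Rmult_le_pos; lra).
      lra. }
    assert (0 <= s*q) by nra.
    assert ((s*q)^2 <= c^2) by nra.
    assert ((s*(2-s))^2 <= (2 - 2*s + s^2) * (s*q)^2).
    { replace ((s*(2-s))^2) with (s^2 * (2-s)^2) by ring.
      replace ((2 - 2*s + s^2) * (s*q)^2) with (s^2 * ((2 - 2*s + s^2) * q^2)) by ring.
      apply Rmult_le_compat_l; [nra|].
      assert (0 <= 3/2 - 9*s^2/16) by lra.
      assert ((3/2 - 9*s^2/16)^2 <= q^2) by (apply pow_incr; lra).
      pose proof (polyB s ltac:(lra)).
      assert (0 <= 2 - 2*s + s^2) by nra. nra. }
    assert (0 <= 2 - 2*s + s^2) by nra. nra.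
Qed.

Theorem lemma6 :
  (forall x : R, 0 <= x <= 1 -> f6 x <= f6 0) /\
  (forall x : R, 0 <= x <= 1 -> g6 0 <= g6 x).
Proof.
  pose proof pi_lo as Hlo; pose proof pi_hi as Hhi.
  assert (F0 : f6 0 = 1).
  { unfold f6. destruct (Req_EM_T 0 1); [lra|].
    replace (PI*0/2) with 0 by field. rewrite cos_0. field. }
  assert (G0 : g6 0 = 1).
  { unfold g6. destruct (Req_EM_T 0 1); [lra|].
    replace (PI*0/2) with 0 by field. rewrite cos_0. field. }
  split; intros x [h1 h2].
  - rewrite F0. unfold f6. destruct (Req_EM_T x 1) as [e|e]; [lra|].
    assert (hx : x < 1) by lra.
    pose proof (part1 x (conj h1 hx)).
    assert (0 < 1 - x^2) by nra.
    apply (Rmult_le_reg_r (1 - x^2)); [lra|].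
    unfold Rdiv. rewrite Rmult_assoc, Rinv_l by lra. lra.
  - rewrite G0. unfold g6. destruct (Req_EM_T x 1) as [e|e]; [nra|].
    assert (hx : x < 1) by lra.
    pose proof (part2 x (conj h1 hx)).
    assert (0 < (1 - x^2)^2) by (apply pow_lt; nra).
    apply (Rmult_le_reg_r ((1 - x^2)^2)); [lra|].
    unfold Rdiv. rewrite Rmult_assoc, Rinv_l by lra. lra.
Qed.
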